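(* Consider a ROS~2 application executed on a single processor by the events executor with the two-queue mechanism described in the context, under the standing assumptions of the context. Any element placed into the child queue by the release logic has priority at least as high as every other released subtask in the executor's queues, i.e., it is always a highest-priority element.
   Context: Model: a ROS~2 application is abstracted as a forest of trees of subtasks. Roots are released periodically/sporadically with known integer job priorities; a child subtask is released immediately when its parent completes (and only then), and inherits its parent's priority (fixed job-level priority). Execution is non-preemptive on a single processor; larger priority values mean higher priority. Executor mechanism (release logic): a released root subtask, whose priority is defined, is pushed into a priority queue (root_queue); a released child subtask, whose priority is undefined, is assigned the value latest_priority and pushed onto a LIFO queue (child_queue). Scheduling logic: at each scheduling decision the tops of the two queues are compared, the one of greater priority is popped and executed, and latest_priority is set to its priority. *)

(* Defs.v *)
From HB Require Import structures.
From mathcomp Require Import all_boot all_order all_algebra.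
Set Implicit Arguments. Unset Strict Implicit. Unset Printing Implicit Defensive.
Import Order.TTheory GRing.Theory Num.Theory.

(* The application is a forest given by
   a parent function: [parent v = None] iff v is a root.  A job (queue element)
   is a pair (subtask, priority); larger integer = higher priority. *)

Fixpoint ancestor (T : finType) (parent : T -> option T) (k : nat) (v : T)
  : option T :=
  match k with
  | 0 => Some v
  | k'.+1 => obind parent (ancestor parent k' v)
  end.

Definition is_forest (T : finType) (parent : T -> option T) : Prop :=
  forall (v : T) (k : nat), (0 < k)%N -> ancestor parent k v <> Some v.

Definition children (T : finType) (parent : T -> option T) (v : T) : seq T :=
  [seq c <- enum T | parent c == Some v].

(* Executor state: root_queue is a priority queue (a multiset, popped at a
   maximal element); child_queue is a LIFO stack whose head is its top. *)
Record state (T : finType) := State {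
  root_queue : seq (T * int);
  child_queue : seq (T * int);
  latest_priority : int }.

Definition push_children (T : finType) (cs : seq T) (lp : int)
  (q : seq (T * int)) : seq (T * int) :=
  foldl (fun q c => (c, lp) :: q) q cs.

(* One executor transition; the middle index is the list of elements placed
   into the child queue by the release logic during that transition. *)
Inductive step (T : finType) (parent : T -> option T)
  : state T -> seq (T * int) -> state T -> Prop :=
| step_release (r : T) (p : int) (st : state T) :
    parent r = None ->
    step parent st [::]
      (State ((r, p) :: root_queue st) (child_queue st) (latest_priority st))
| step_exec_root (v : T) (p : int) (cs : seq T) (st : state T) :
    (v, p) \in root_queue st ->
    (forall y, y \in root_queue st -> (y.2 <= p)%R) ->
    match child_queue st with [::] => True | c :: _ => (c.2 <= p)%R end ->
    (* children of v are released at its completion, in some order *)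
    perm_eq cs (children parent v) ->
    let lp := p in
    step parent st [seq (c, lp) | c <- cs]
      (State (rem (v, p) (root_queue st)) (push_children cs lp (child_queue st)) lp)
| step_exec_child (v : T) (p : int) (rest : seq (T * int)) (cs : seq T)
    (st : state T) :
    child_queue st = (v, p) :: rest ->
    (forall y, y \in root_queue st -> (y.2 <= p)%R) ->
    perm_eq cs (children parent v) ->
    let lp := p in
    step parent st [seq (c, lp) | c <- cs]
      (State (root_queue st) (push_children cs lp rest) lp).

Inductive reachable (T : finType) (parent : T -> option T) : state T -> Prop :=
| reach_init (l0 : int) : reachable parent (State [::] [::] l0)
| reach_step (st : state T) (pushed : seq (T * int)) (st' : state T) :
    reachable parent st -> step parent st pushed st' -> reachable parent st'.

(* Main.v *)
Require Import Defs.
From HB Require Import structures.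
From mathcomp Require Import all_boot all_order all_algebra.
Import Order.TTheory GRing.Theory Num.Theory.
Set Implicit Arguments. Unset Strict Implicit.

Definition rge (T : finType) : rel (T * int) := fun a b => (b.2 <= a.2)%R.

Lemma rge_trans (T : finType) : transitive (@rge T).
Proof. move=> b a c /= h1 h2; rewrite /rge; exact: (le_trans h2 h1). Qed.

Lemma push_childrenE (T : finType) (cs : seq T) lp q :
  push_children cs lp q = [seq (c, lp) | c <- rev cs] ++ q.
Proof.
elim: cs q => [|c cs IH] q //=.
rewrite /push_children /= -/(push_children _ _ _) IH rev_cons map_rcons cat_rcons //.
Qed.

Definition topok (T : finType) (q : seq (T * int)) (lp : int) :=
  match q with [::] => True | c :: _ => (c.2 <= lp)%R end.

Lemma path_push (T : finType) lp (q : seq (T * int)) (l : seq T) (x : T * int) :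
  x.2 = lp -> topok q lp -> sorted (@rge T) q ->
  path (@rge T) x ([seq (c, lp) | c <- l] ++ q).
Proof.
elim: l x => [|b l IH] x hx /=.
  case: q => [|c q] //= hc hs; rewrite hs andbT /rge hx //.
move=> hc hs; rewrite /rge hx /= lexx /=; exact: IH.
Qed.

Lemma sorted_push (T : finType) lp (q : seq (T * int)) (l : seq T) :
  topok q lp -> sorted (@rge T) q ->
  sorted (@rge T) ([seq (c, lp) | c <- l] ++ q).
Proof.
case: l => [|b l] //= hc hs; exact: path_push.
Qed.

Lemma inv (T : finType) (parent : T -> option T) st :
  reachable parent st -> sorted (@rge T) (child_queue st).
Proof.
elim=> [//|{}st pushed st' _ IH hs]; move: IH; case: hs => //=.
- move=> v p cs {}st _ _ htop _ IH; rewrite push_childrenE; exact: sorted_push.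
- move=> v p rest cs {}st hq _ _ IH; rewrite push_childrenE.
  rewrite hq /= in IH; apply: sorted_push; last exact: path_sorted IH.
  by case: rest IH {hq} => //= c r /andP[].
Qed.

Theorem lemma4 (T : finType) (parent : T -> option T) (st : state T)
  (pushed : seq (T * int)) (st' : state T) (x : T * int) :
  is_forest parent ->
  reachable parent st ->
  step parent st pushed st' ->
  x \in pushed ->
  forall y : T * int, y \in root_queue st' ++ child_queue st' ->
  (y.2 <= x.2)%R.
Proof.
move=> _ hr hs; have hsort := inv hr; clear hr.
move: hsort; case: hs => //=.
- move=> v p cs {}st hin hmax htop _ hsort /mapP[c _ ->] y.
  rewrite push_childrenE mem_cat => /orP[/mem_rem/hmax //|].
  rewrite mem_cat => /orP[/mapP[? _ ->] //|hy].
  case: (child_queue st) hsort htop hy => // c0 q hso hc.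
  rewrite inE => /orP[/eqP -> //|hy].
  apply: le_trans hc.
  by have /allP/(_ y hy) := order_path_min (@rge_trans T) hso.
- move=> v p rest cs {}st hq hmax _ hsort /mapP[c _ ->] y.
  rewrite push_childrenE mem_cat => /orP[/hmax //|].
  rewrite mem_cat => /orP[/mapP[? _ ->] //|hy].
  rewrite hq in hsort.
  by have /allP/(_ y hy) := order_path_min (@rge_trans T) hsort.
Qed.
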